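(* Assume Conditions A, B, C with $k_1=0$ (so $H(q,X)=H(X)$), let $0<T<\infty$, let $\chi:(0,T)\to\mathbb{R}$ be bounded continuous with $\alpha=\sup_{(0,T)}|\chi|$, and let $Z$ be a non-increasing continuous function from (a set containing) $[0,\infty)$ to $[0,\infty)$. Set $M=\max(\Lambda^{\sup},1)$ and $\bar E=2(1+T)M$. Fix $z\in\mathbb{R}^n$, $r=|x-z|$. Then for every $b>0$ the function $w(x,t)=\alpha t+b(1+t)e^{r^2/\bar E}$ is a (classical, hence viscosity) super-solution of $H(D^2w+Z(w)Dw\otimes Dw)+\chi(t)-w_t\le0$ in $\mathbb{R}^n\times(0,T)$.
   Context: $S^{n\times n}$ denotes the real symmetric matrices with the usual order, $I$ the identity, $O$ the zero matrix, $(e\otimes e)_{ij}=e_ie_j$, $(p\otimes q)_{ij}=p_iq_j$. $H:\mathbb{R}^n\times S^{n\times n}\to\mathbb{R}$ is continuous and satisfies: Condition A: $H(q,X)\le H(q,Y)$ when $X\le Y$ and $H(q,O)=0$. Condition B: there is $k_1\ge0$ with $H(\theta q,X)=|\theta|^{k_1}H(q,X)$ for all $\theta\in\mathbb{R}$ and $H(q,\theta X)=\theta H(q,X)$ for $\theta>0$. Condition C: $\max_{|e|=1}H(e,-I)<0<\min_{|e|=1}H(e,I)$ and $\Lambda^{\sup}:=\sup_{\lambda\in\mathbb{R}}\max_{|e|=1}H(e,\lambda e\otimes e+I)<\infty$. *)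

(* Defs.v *)
From mathcomp Require Import ssreflect ssrfun ssrbool eqtype ssrnat seq fintype bigop.
From Stdlib Require Import Reals.
Set Implicit Arguments. Unset Strict Implicit.
Open Scope R_scope.

Definition vec (n : nat) := 'I_n -> R.
Definition mat (n : nat) := 'I_n -> 'I_n -> R.

Definition rsum (n : nat) (f : 'I_n -> R) : R := \big[Rplus/0]_(i < n) f i.

Definition sym (n : nat) (X : mat n) : Prop := forall i j, X i j = X j i.
Definition mat_le (n : nat) (X Y : mat n) : Prop :=
  forall xi : vec n, 0 <= rsum (fun i => rsum (fun j => xi i * (Y i j - X i j) * xi j)).
Definition idm (n : nat) : mat n := fun i j => if i == j then 1 else 0.
Definition zerom (n : nat) : mat n := fun _ _ => 0.
Definition outer (n : nat) (p q : vec n) : mat n := fun i j => p i * q j.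
Definition madd (n : nat) (X Y : mat n) : mat n := fun i j => X i j + Y i j.
Definition mscale (n : nat) (a : R) (X : mat n) : mat n := fun i j => a * X i j.
Definition mopp (n : nat) (X : mat n) : mat n := fun i j => - X i j.
Definition vscale (n : nat) (a : R) (q : vec n) : vec n := fun i => a * q i.
Definition vnorm (n : nat) (e : vec n) : R := sqrt (rsum (fun i => e i ^ 2)).
Definition dist2 (n : nat) (x z : vec n) : R := rsum (fun i => (x i - z i) ^ 2).

Definition H_continuous (n : nat) (H : vec n -> mat n -> R) : Prop :=
  forall q X, sym X -> forall eps, 0 < eps -> exists delta, 0 < delta /\
    forall q' X', sym X' -> (forall i, Rabs (q' i - q i) < delta) ->
      (forall i j, Rabs (X' i j - X i j) < delta) -> Rabs (H q' X' - H q X) < eps.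

Definition condA (n : nat) (H : vec n -> mat n -> R) : Prop :=
  (forall q X Y, sym X -> sym Y -> mat_le X Y -> H q X <= H q Y) /\
  (forall q, H q (@zerom n) = 0).

(* Condition B with k1 = 0 (|theta|^0 = 1 for every real theta) *)
Definition condB0 (n : nat) (H : vec n -> mat n -> R) : Prop :=
  (forall theta q X, sym X -> H (vscale theta q) X = H q X) /\
  (forall theta q X, sym X -> 0 < theta -> H q (mscale theta X) = theta * H q X).

Definition is_max (S : R -> Prop) (m : R) : Prop := S m /\ forall y, S y -> y <= m.
Definition is_min (S : R -> Prop) (m : R) : Prop := S m /\ forall y, S y -> m <= y.

Definition unit_vals (n : nat) (H : vec n -> mat n -> R) (F : vec n -> mat n) : R -> Prop :=
  fun y => exists e : vec n, vnorm e = 1 /\ y = H e (F e).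

(* Condition C, with Lsup = Lambda^sup (finite) *)
Definition condC (n : nat) (H : vec n -> mat n -> R) (Lsup : R) : Prop :=
  (exists m, is_max (unit_vals H (fun _ => mopp (@idm n))) m /\ m < 0) /\
  (exists m, is_min (unit_vals H (fun _ => @idm n)) m /\ 0 < m) /\
  is_lub (fun y => exists lam : R,
            is_max (unit_vals H (fun e => madd (mscale lam (outer e e)) (@idm n))) y) Lsup.

Definition upd (n : nat) (x : vec n) (i : 'I_n) (s : R) : vec n :=
  fun j => if j == i then s else x j.
Definition partial_x (n : nat) (f : vec n -> R -> R) (i : 'I_n) (x : vec n) (t l : R) : Prop :=
  derivable_pt_lim (fun s => f (upd x i s) t) (x i) l.
Definition partial_t (n : nat) (f : vec n -> R -> R) (x : vec n) (t l : R) : Prop :=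
  derivable_pt_lim (fun s => f x s) t l.
Definition cont_xt (n : nat) (f : vec n -> R -> R) (x : vec n) (t : R) : Prop :=
  forall eps, 0 < eps -> exists delta, 0 < delta /\
    forall y s, (forall i, Rabs (y i - x i) < delta) -> Rabs (s - t) < delta ->
      Rabs (f y s - f x t) < eps.

Definition classical_supersol (n : nat) (H : vec n -> mat n -> R) (Z chi : R -> R) (T : R)
    (w : vec n -> R -> R) : Prop :=
  exists (Dw : 'I_n -> vec n -> R -> R) (D2w : 'I_n -> 'I_n -> vec n -> R -> R)
         (wt : vec n -> R -> R),
  forall x t, 0 < t < T ->
    (forall i, partial_x w i x t (Dw i x t)) /\
    (forall i j, partial_x (Dw i) j x t (D2w i j x t)) /\
    partial_t w x t (wt x t) /\
    cont_xt w x t /\ (forall i, cont_xt (Dw i) x t) /\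
    (forall i j, cont_xt (D2w i j) x t) /\ cont_xt wt x t /\
    H (fun i => Dw i x t)
      (fun i j => D2w i j x t + Z (w x t) * Dw i x t * Dw j x t) + chi t - wt x t <= 0.

(* Main.v *)
Require Import Defs.
From mathcomp Require Import ssreflect ssrfun ssrbool eqtype ssrnat seq fintype bigop.
From Stdlib Require Import Reals Lra Psatz FunctionalExtensionality.
From HB Require Import structures.
From Coquelicot Require Coquelicot.
From mathcomp Require all_boot all_order all_algebra.
From mathcomp Require all_classical all_reals all_analysis Rstruct Rstruct_topology.
Open Scope R_scope.
Set Implicit Arguments. Unset Strict Implicit.

HB.instance Definition _ := Monoid.isComLaw.Build R 0 Rplus (fun a b c => esym (Rplus_assoc a b c)) Rplus_comm Rplus_0_l.

Lemma rsum_ext n (f g : 'I_n -> R) : (forall i, f i = g i) -> rsum f = rsum g.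
Proof. by move=> H; apply: eq_bigr => i _. Qed.

Lemma lsum_scal (I : Type) (r : seq I) a (f : I -> R) :
  \big[Rplus/0]_(i <- r) (a * f i) = a * \big[Rplus/0]_(i <- r) f i.
Proof.
elim: r => [|j r IH]; rewrite ?big_nil ?big_cons.
  by rewrite Rmult_0_r.
by rewrite IH Rmult_plus_distr_l.
Qed.

Lemma rsum_scal n a (f : 'I_n -> R) : rsum (fun i => a * f i) = a * rsum f.
Proof. exact: lsum_scal. Qed.

Lemma lsum_nonneg (I : Type) (r : seq I) (f : I -> R) :
  (forall i, 0 <= f i) -> 0 <= \big[Rplus/0]_(i <- r) f i.
Proof.
move=> H; elim: r => [|j r IH]; rewrite ?big_nil ?big_cons.
  by apply: Rle_refl.
by apply: Rplus_le_le_0_compat.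
Qed.

Lemma rsum_nonneg n (f : 'I_n -> R) : (forall i, 0 <= f i) -> 0 <= rsum f.
Proof. exact: lsum_nonneg. Qed.

Lemma rsum_split n (f : 'I_n -> R) i : rsum f = f i + rsum (fun j => if j == i then 0 else f j).
Proof.
rewrite /rsum (bigD1 i) //= [X in _ = _ + X](bigD1 i) //= eqxx Rplus_0_l.
congr (_ + _); apply: eq_bigr => j /negbTE ->; done.
Qed.

Lemma rsum_le_term n (f : 'I_n -> R) i : (forall j, 0 <= f j) -> f i <= rsum f.
Proof.
move=> H; rewrite (rsum_split f i).
have : 0 <= rsum (fun j => if j == i then 0 else f j).
  apply: rsum_nonneg => j; case: (j == i) => //; lra.
lra.
Qed.

Lemma rsum_delta n (i : 'I_n) c : rsum (fun j => if j == i then c else 0) = c.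
Proof.
rewrite (rsum_split _ i) eqxx.
rewrite (@rsum_ext _ _ (fun _ => 0)); last by move=> j; case: (j == i).
rewrite /rsum big1 //; lra.
Qed.

Lemma cont_const n c (x : vec n) t : cont_xt (fun (_ : vec n) (_ : R) => c) x t.
Proof. move=> e e0; exists 1; split; first lra. move=> y s _ _; rewrite Rminus_eq_0 Rabs_R0; lra. Qed.

Lemma cont_proj n i (x : vec n) t : cont_xt (fun (y : vec n) (_ : R) => y i) x t.
Proof. move=> e e0; exists e; split => // y s H _; exact: H. Qed.

Lemma cont_time n (x : vec n) t : cont_xt (fun (_ : vec n) (s : R) => s) x t.
Proof. move=> e e0; exists e; split => // y s _ H; exact: H. Qed.

Lemma cont_op2 n (h : R -> R -> R) (f g : vec n -> R -> R) x t :
  cont_xt f x t -> cont_xt g x t ->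
  (forall eps, 0 < eps -> exists d, 0 < d /\ forall a b, Rabs (a - f x t) < d ->
      Rabs (b - g x t) < d -> Rabs (h a b - h (f x t) (g x t)) < eps) ->
  cont_xt (fun y s => h (f y s) (g y s)) x t.
Proof.
move=> Hf Hg Hh e e0.
have [d [d0 Hd]] := Hh e e0.
have [d1 [d10 Hd1]] := Hf d d0.
have [d2 [d20 Hd2]] := Hg d d0.
exists (Rmin d1 d2); split; first by apply: Rmin_pos.
move=> y s Hy Hs; apply: Hd.
- apply: Hd1 => [i|]; [apply: Rlt_le_trans (Hy i) (Rmin_l _ _)|apply: Rlt_le_trans Hs (Rmin_l _ _)].
- apply: Hd2 => [i|]; [apply: Rlt_le_trans (Hy i) (Rmin_r _ _)|apply: Rlt_le_trans Hs (Rmin_r _ _)].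
Qed.

Lemma cont_plus n (f g : vec n -> R -> R) x t :
  cont_xt f x t -> cont_xt g x t -> cont_xt (fun y s => f y s + g y s) x t.
Proof.
move=> Hf Hg; apply: (@cont_op2 _ Rplus f g) => // e e0.
exists (e / 2); split; first lra.
move=> a b Ha Hb.
have -> : a + b - (f x t + g x t) = (a - f x t) + (b - g x t) by ring.
apply: Rle_lt_trans (Rabs_triang _ _) _; lra.
Qed.

Lemma mult_cont_aux a0 b0 e : 0 < e -> exists d, 0 < d /\ forall a b, Rabs (a - a0) < d ->
      Rabs (b - b0) < d -> Rabs (a * b - a0 * b0) < e.
Proof.
move=> e0.
set K := 1 + Rabs a0 + Rabs b0.
have K1 : 1 <= K by have := Rabs_pos a0; have := Rabs_pos b0; rewrite /K; lra.
exists (Rmin 1 (e / (2 * K))); split.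
  apply: Rmin_pos; first lra. apply: Rdiv_lt_0_compat; lra.
move=> a b Ha Hb.
set d := Rmin 1 (e / (2 * K)) in Ha Hb.
have d1 : d <= 1 by apply: Rmin_l.
have dK : d * K <= e / 2.
  have : d <= e / (2 * K) by apply: Rmin_r.
  move=> H; have -> : e / 2 = e / (2 * K) * K by field; lra.
  by apply: Rmult_le_compat_r; lra.
have -> : a * b - a0 * b0 = (a - a0) * (b - b0) + a0 * (b - b0) + b0 * (a - a0) by ring.
apply: Rle_lt_trans (Rabs_triang _ _) _.
apply: Rle_lt_trans (Rplus_le_compat_r _ _ _ (Rabs_triang _ _)) _.
rewrite !Rabs_mult.
have := Rabs_pos (a - a0); have := Rabs_pos (b - b0); have := Rabs_pos a0; have := Rabs_pos b0.
rewrite /K in dK K1 |- *.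
move=> h1 h2 h3 h4.
have : Rabs (a - a0) * Rabs (b - b0) <= d * 1 by apply: Rmult_le_compat; lra.
have : Rabs a0 * Rabs (b - b0) <= Rabs a0 * d by apply: Rmult_le_compat_l; lra.
have : Rabs b0 * Rabs (a - a0) <= Rabs b0 * d by apply: Rmult_le_compat_l; lra.
nra.
Qed.

Lemma cont_mult n (f g : vec n -> R -> R) x t :
  cont_xt f x t -> cont_xt g x t -> cont_xt (fun y s => f y s * g y s) x t.
Proof. move=> Hf Hg; apply: (@cont_op2 _ Rmult f g) => // e e0; exact: mult_cont_aux. Qed.

Lemma cont_comp1 n (h : R -> R) (f : vec n -> R -> R) x t :
  continuity_pt h (f x t) -> cont_xt f x t -> cont_xt (fun y s => h (f y s)) x t.
Proof.
move=> Hh Hf e e0.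
have [d [d0 Hd]] := Hh e e0.
have [d1 [d10 Hd1]] := Hf d d0.
exists d1; split => // y s Hy Hs.
have := Hd1 y s Hy Hs => Hfy.
case: (Req_dec (f y s) (f x t)) => [->|Hne].
  rewrite Rminus_eq_0 Rabs_R0; lra.
apply: (Hd (f y s)); split; first by split => //; apply: not_eq_sym.
exact: Hfy.
Qed.

Lemma cont_lsum n (I : Type) (r : seq I) (F : I -> vec n -> R -> R) x t :
  (forall k, cont_xt (F k) x t) ->
  cont_xt (fun y s => \big[Rplus/0]_(k <- r) F k y s) x t.
Proof.
move=> H; elim: r => [|k r IH].
  have -> : (fun y s => \big[Rplus/0]_(k <- [::]) F k y s) = (fun _ _ => 0).
    by apply: functional_extensionality => y; apply: functional_extensionality => s; rewrite big_nil.
  exact: cont_const.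
have -> : (fun y s => \big[Rplus/0]_(k <- k :: r) F k y s) =
   (fun y s => F k y s + \big[Rplus/0]_(k <- r) F k y s).
  by apply: functional_extensionality => y; apply: functional_extensionality => s; rewrite big_cons.
exact: cont_plus.
Qed.

Lemma cont_rsum n m (F : 'I_m -> vec n -> R -> R) x t :
  (forall k, cont_xt (F k) x t) -> cont_xt (fun y s => rsum (fun k => F k y s)) x t.
Proof. exact: cont_lsum. Qed.

Section D.
Import Coquelicot.Coquelicot.
Lemma D1 A B c K E s0 : E <> 0 ->
  derivable_pt_lim (fun s => A + B * exp(((s - c)^2 + K)/E)) s0
     (B * exp(((s0-c)^2+K)/E) * (2*(s0-c)/E)).
Proof. intros E0. apply is_derive_Reals. auto_derive; [exact I| unfold Rdiv, Rminus; simpl; ring]. Qed.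
Lemma D2 B c K E C s0 : E <> 0 ->
  derivable_pt_lim (fun s => B * exp(((s - c)^2 + K)/E) * C) s0
     (B * exp(((s0-c)^2+K)/E) * (2*(s0-c)/E) * C).
Proof. intros E0. apply is_derive_Reals. auto_derive; [exact I| unfold Rdiv, Rminus; simpl; ring]. Qed.
Lemma D3 B c K E s0 : E <> 0 ->
  derivable_pt_lim (fun s => B * exp(((s - c)^2 + K)/E) * (2*(s-c)/E)) s0
     (B * exp(((s0-c)^2+K)/E) * (2*(s0-c)/E) * (2*(s0-c)/E) + B * exp(((s0-c)^2+K)/E) * (2/E)).
Proof. intros E0. apply is_derive_Reals. auto_derive; [exact I| unfold Rdiv, Rminus; simpl; ring]. Qed.
Lemma D4 al b P s0 :
  derivable_pt_lim (fun s => al * s + b * (1 + s) * P) s0 (al + b * P).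
Proof. apply is_derive_Reals. auto_derive; [exact I| ring]. Qed.
End D.

Section EVT.
From mathcomp Require Import all_boot all_order all_algebra.
From mathcomp Require Import all_classical all_reals all_analysis Rstruct Rstruct_topology.
Import Order.TTheory GRing.Theory Num.Theory.
Local Open Scope classical_set_scope.

Lemma bridge n (f : 'rV[R]_n -> R) (v : 'rV[R]_n) :
  (forall eps, 0 < eps -> exists d, 0 < d /\ forall v' : 'rV[R]_n,
     (forall i, Rabs (v' ord0 i - v ord0 i) < d) -> Rabs (f v' - f v) < eps) ->
  (f x @[x --> v] --> f v).
Proof.
move=> H.
apply/(@cvgrPdist_lt _ R^o _ (nbhs v) _ f (f v)) => e /RltP e0.
have [d [/RltP d0 Hd]] := H e e0.
apply: filterS (near_ball v d d0) => v' [_ Hb].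
rewrite -RabsE Rabs_minus_sym; apply/RltP; apply: Hd => i.
have := Hb ord0 i. rewrite /ball /= -RabsE => /RltP.
by rewrite Rabs_minus_sym.
Qed.

Lemma evt_sphere n (Hn : (0 < n)%nat) (F : vec n -> R) :
  (forall v eps, 0 < eps -> exists d, 0 < d /\ forall v', (forall i, Rabs (v' i - v i) < d) -> Rabs (F v' - F v) < eps) ->
  (forall (v : vec n) eps, 0 < eps -> exists d, 0 < d /\ forall v' : vec n, (forall i, Rabs (v' i - v i) < d) ->
      Rabs (rsum (fun i => v' i ^ 2) - rsum (fun i => v i ^ 2)) < eps) ->
  exists c, rsum (fun i => c i ^ 2) = 1 /\ forall e, rsum (fun i => e i ^ 2) = 1 -> F e <= F c.
Proof.
move=> HF HG.
pose G := fun v : 'rV[R]_n => rsum (fun i => v ord0 i ^ 2).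
pose f := fun v : 'rV[R]_n => F (fun i => v ord0 i).
have fc : continuous f.
  move=> v; apply: bridge => e e0; have [d [d0 Hd]] := HF (fun i => v ord0 i) e e0.
  by exists d; split => // v' Hv'; apply: Hd.
have Gc : continuous G.
  move=> v; apply: bridge => e e0; have [d [d0 Hd]] := HG (fun i => v ord0 i) e e0.
  by exists d; split => // v' Hv'; apply: (Hd (fun i => v' ord0 i)).
pose S := [set v : 'rV[R]_n | forall i, `[-1, 1]%classic (v ord0 i)] `&` (G @^-1` [set 1]).
have cS : compact S.
  apply: compact_closedI.
    by apply: (@rV_compact _ _ (fun _ => `[-1, 1]%classic)) => i; apply: segment_compact.
  apply: preimage_closed; first by move=> v _; apply: Gc.
  exact: closed_eq.
have S0 : S !=set0.
  pose i0 := Ordinal Hn.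
  exists (\row_i (if i == i0 then 1 else 0))%R; split.
    move=> i /=; rewrite mxE in_itv /=; apply/andP; split; apply/RleP; rewrite -?R1E -?R0E; case: (i == i0); lra.
  rewrite /G /= (@rsum_ext _ _ (fun i => if i == i0 then 1 else 0)) ?rsum_delta // => i; rewrite mxE -?R1E -?R0E; case: (i == i0); ring.
have [c cS' Hc] := EVT_max_rV S0 cS (continuous_subspaceT fc).
exists (fun i => c ord0 i); split.
  by move: cS' => /set_mem [_].
move=> e He.
have Hin : (\row_i e i)%R \in S.
  apply/mem_set; split.
    move=> i /=; rewrite mxE in_itv /=.
    have Hle : e i ^ 2 <= 1.
      rewrite -He; apply: (@rsum_le_term _ (fun j => e j ^ 2)) => j; apply: pow2_ge_0.
    by apply/andP; split; apply/RleP; rewrite -?R1E; nra.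
  rewrite /G /= (@rsum_ext _ _ (fun i => e i ^ 2)) ?He // => i; rewrite mxE /=; ring.
move/RleP: (Hc _ Hin); rewrite /f.
have -> : (fun i => (\row_i e i)%R ord0 i) = e.
  by apply: functional_extensionality => i; rewrite mxE.
done.
Qed.
End EVT.

Lemma fin_delta n (I : finType) (Q : I -> vec n -> Prop) (v : vec n) :
  (forall k, exists d, 0 < d /\ forall v', (forall i, Rabs (v' i - v i) < d) -> Q k v') ->
  exists d, 0 < d /\ forall v', (forall i, Rabs (v' i - v i) < d) -> forall k, Q k v'.
Proof.
move=> H.
suff Hr : forall r : seq I, exists d, 0 < d /\ forall v', (forall i, Rabs (v' i - v i) < d) ->
   forall k, k \in r -> Q k v'.
  have [d [d0 Hd]] := Hr (index_enum I).
  exists d; split => // v' Hv' k; apply: Hd => //; exact: mem_index_enum.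
elim => [|k r [d [d0 Hd]]].
  by exists 1; split => //; lra.
have [dk [dk0 Hdk]] := H k.
exists (Rmin d dk); split; first by apply: Rmin_pos.
move=> v' Hv' k'; rewrite inE => /orP [/eqP ->|Hk'].
  by apply: Hdk => i; apply: Rlt_le_trans (Hv' i) (Rmin_r _ _).
by apply: Hd => // i; apply: Rlt_le_trans (Hv' i) (Rmin_l _ _).
Qed.

Lemma cont_xt_vec n (g : vec n -> R) (v : vec n) :
  cont_xt (fun y (_ : R) => g y) v 0 ->
  forall eps, 0 < eps -> exists d, 0 < d /\ forall v', (forall i, Rabs (v' i - v i) < d) -> Rabs (g v' - g v) < eps.
Proof.
move=> H e e0; have [d [d0 Hd]] := H e e0.
exists d; split => // v' Hv'; apply: (Hd v' 0) => //.
by rewrite Rminus_eq_0 Rabs_R0.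
Qed.

Lemma cont_sq n (f : vec n -> R -> R) x t : cont_xt f x t -> cont_xt (fun y s => f y s ^ 2) x t.
Proof.
move=> Hf; apply: (@cont_comp1 _ (fun a => a ^ 2) f) => //.
exact: derivable_continuous_pt (derivable_pow 2 _).
Qed.

Lemma sqrt_eq1 a : 0 <= a -> sqrt a = 1 -> a = 1.
Proof. move=> a0 H; rewrite -(sqrt_sqrt a a0) H; ring. Qed.

Definition Xl n (lam : R) (e : vec n) : mat n := madd (mscale lam (outer e e)) (@idm n).

Lemma sym_Xl n lam (e : vec n) : sym (Xl lam e).
Proof.
move=> i j; rewrite /Xl /madd /mscale /outer /idm eq_sym; congr (_ * _ + _); ring.
Qed.

Lemma key_bound n (Hn : (0 < n)%nat) (H : vec n -> mat n -> R) Lsup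
  (Hcont : H_continuous H) (HC : condC H Lsup) lam (e : vec n) :
  vnorm e = 1 -> H e (Xl lam e) <= Lsup.
Proof.
move=> He.
pose F := fun v : vec n => H v (Xl lam v).
have HFc : forall (v : vec n) eps, 0 < eps -> exists d, 0 < d /\ forall v' : vec n,
    (forall i, Rabs (v' i - v i) < d) -> Rabs (F v' - F v) < eps.
  move=> v eps eps0.
  have [d [d0 Hd]] := Hcont v (Xl lam v) (sym_Xl lam v) eps eps0.
  have [d1 [d10 Hd1]] := @fin_delta n ('I_n * 'I_n)%type
     (fun k v' => Rabs (Xl lam v' k.1 k.2 - Xl lam v k.1 k.2) < d) v
     (fun k => @cont_xt_vec n (fun y => Xl lam y k.1 k.2) v
        (cont_plus (cont_mult (cont_const _ _ _) (cont_mult (cont_proj _ _ _) (cont_proj _ _ _)))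
                   (cont_const _ _ _)) d d0).
  exists (Rmin d d1); split; first by apply: Rmin_pos.
  move=> v' Hv'; apply: Hd; first exact: sym_Xl.
    by move=> i; apply: Rlt_le_trans (Hv' i) (Rmin_l _ _).
  move=> i j; apply: (Hd1 v' _ (i, j)) => k.
  by apply: Rlt_le_trans (Hv' k) (Rmin_r _ _).
have HGc : forall (v : vec n) eps, 0 < eps -> exists d, 0 < d /\ forall v' : vec n,
    (forall i, Rabs (v' i - v i) < d) ->
    Rabs (rsum (fun i => v' i ^ 2) - rsum (fun i => v i ^ 2)) < eps.
  move=> v; apply: (@cont_xt_vec n (fun y => rsum (fun i => y i ^ 2))).
  apply: (@cont_rsum n n (fun i y s => y i ^ 2)) => k; apply: cont_sq; exact: cont_proj.
have [c [Hc1 Hc2]] := evt_sphere Hn HFc HGc.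
have Hsum : forall v : vec n, 0 <= rsum (fun i => v i ^ 2).
  by move=> v; apply: rsum_nonneg => i; apply: pow2_ge_0.
have Hmax : is_max (unit_vals H (fun v => Xl lam v)) (F c).
  split.
    by exists c; split => //; rewrite /vnorm Hc1 sqrt_1.
  move=> y [e' [He' ->]].
  by apply: Hc2; apply: sqrt_eq1 => //.
case: HC => _ [_ [Hub _]].
apply: Rle_trans (Hc2 e _) (Hub (F c) _).
  by apply: sqrt_eq1.
by exists lam.
Qed.

Lemma upd_id n (x : vec n) i : upd x i (x i) = x.
Proof. apply: functional_extensionality => j; rewrite /upd; case: eqP => [->|] //. Qed.

Lemma upd_at n (x : vec n) i s : upd x i s i = s.
Proof. by rewrite /upd eqxx. Qed.

Lemma upd_ne n (x : vec n) i j s : j != i -> upd x i s j = x j.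
Proof. by rewrite /upd => /negbTE ->. Qed.

Definition Kc n (x z : vec n) i := rsum (fun j => if j == i then 0 else (x j - z j) ^ 2).

Lemma dist2_upd n (x z : vec n) i s : dist2 (upd x i s) z = (s - z i) ^ 2 + Kc x z i.
Proof.
rewrite /dist2 (rsum_split _ i) upd_at; congr (_ + _); apply: rsum_ext => j.
by case: eqP => // /eqP Hj; rewrite upd_ne.
Qed.

Lemma dist2_K n (x z : vec n) i : dist2 x z = (x i - z i) ^ 2 + Kc x z i.
Proof. by rewrite -dist2_upd upd_id. Qed.

Lemma cont_phi n (z : vec n) E x t :
  cont_xt (fun y (_ : R) => exp (dist2 y z / E)) x t.
Proof.
apply: (@cont_comp1 _ exp (fun y _ => dist2 y z / E)).
  exact: derivable_continuous_pt (derivable_pt_exp _).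
apply: (@cont_mult _ (fun y _ => dist2 y z) (fun _ _ => / E)); last exact: cont_const.
apply: (@cont_rsum n n (fun k y s => (y k - z k) ^ 2)) => k.
apply: cont_sq; apply: (@cont_plus _ (fun y _ => y k) (fun _ _ => - z k)); [exact: cont_proj|exact: cont_const].
Qed.

Lemma sym_mscale n k (X : mat n) : sym X -> sym (mscale k X).
Proof. by move=> HX i j; rewrite /mscale HX. Qed.

Lemma vnorm_e0 n (i0 : 'I_n) : vnorm (fun i => if i == i0 then 1 else 0) = 1.
Proof.
rewrite /vnorm (@rsum_ext _ _ (fun i => if i == i0 then 1 else 0)) ?rsum_delta ?sqrt_1 // => i.
case: (i == i0); ring.
Qed.

Unset Implicit Arguments.

Theorem mainTheorem9 (n : nat) (Hn : (0 < n)%nat)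
  (H : vec n -> mat n -> R) (Lsup : R)
  (Hcont : H_continuous H) (HA : condA H) (HB : condB0 H) (HC : condC H Lsup)
  (T : R) (HT : 0 < T)
  (chi : R -> R) (alpha : R)
  (chi_cont : forall t, 0 < t < T -> continuity_pt chi t)
  (chi_bdd : exists B, forall t, 0 < t < T -> Rabs (chi t) <= B)
  (Halpha : is_lub (fun y => exists t, 0 < t < T /\ y = Rabs (chi t)) alpha)
  (Z : R -> R)
  (Z_nonneg : forall s, 0 <= s -> 0 <= Z s)
  (Z_noninc : forall s1 s2, 0 <= s1 -> s1 <= s2 -> Z s2 <= Z s1)
  (Z_cont : forall s, 0 <= s -> forall eps, 0 < eps -> exists delta, 0 < delta /\
              forall s', 0 <= s' -> Rabs (s' - s) < delta -> Rabs (Z s' - Z s) < eps)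
  (z : vec n) (b : R) (Hb : 0 < b) :
  let M := Rmax Lsup 1 in
  let Ebar := 2 * (1 + T) * M in
  classical_supersol H Z chi T
    (fun x t => alpha * t + b * (1 + t) * exp (dist2 x z / Ebar)).
Proof.
move=> M Ebar.
have M1 : 1 <= M by apply: Rmax_r.
have HLM : Lsup <= M by apply: Rmax_l.
have E0 : 0 < Ebar by rewrite /Ebar; nra.
have Eneq : Ebar <> 0 by lra.
case: Halpha => Hub _.
have chi_le : forall t, 0 < t < T -> chi t <= alpha.
  move=> t Ht; apply: Rle_trans (Rle_abs _) _; apply: Hub; by exists t.
pose Dw := fun (i : 'I_n) (y : vec n) (s : R) =>
  b * (1 + s) * exp (dist2 y z / Ebar) * (2 * (y i - z i) / Ebar).
pose D2w := fun (i j : 'I_n) (y : vec n) (s : R) =>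
  b * (1 + s) * exp (dist2 y z / Ebar) * (2 * (y j - z j) / Ebar) * (2 * (y i - z i) / Ebar) +
  (if i == j then b * (1 + s) * exp (dist2 y z / Ebar) * (2 / Ebar) else 0).
pose wt := fun (y : vec n) (s : R) => alpha + b * exp (dist2 y z / Ebar).
exists Dw, D2w, wt => x t Ht.
have Hphi := cont_phi z Ebar x t.
have H1 : cont_xt (fun (y : vec n) (s : R) => alpha * s) x t.
  exact: (@cont_mult _ (fun _ _ => alpha) (fun _ s => s) _ _ (cont_const _ _ _) (cont_time _ _)).
have H2 : cont_xt (fun (y : vec n) (s : R) => b * (1 + s)) x t.
  exact: (@cont_mult _ (fun _ _ => b) (fun _ s => 1 + s) _ _ (cont_const _ _ _)
           (@cont_plus _ (fun _ _ => 1) (fun _ s => s) _ _ (cont_const _ _ _) (cont_time _ _))).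
have H3 : cont_xt (fun (y : vec n) (s : R) => b * (1 + s) * exp (dist2 y z / Ebar)) x t.
  exact: (@cont_mult _ _ _ _ _ H2 Hphi).
have H4 : forall i, cont_xt (fun (y : vec n) (s : R) => 2 * (y i - z i) / Ebar) x t.
  move=> i.
  exact: (@cont_mult _ (fun y _ => 2 * (y i - z i)) (fun _ _ => / Ebar) _ _
    (@cont_mult _ (fun _ _ => 2) (fun y _ => y i - z i) _ _ (cont_const _ _ _)
       (@cont_plus _ (fun y _ => y i) (fun _ _ => - z i) _ _ (cont_proj _ _ _) (cont_const _ _ _)))
    (cont_const _ _ _)).
split; [|split; [|split; [|split; [|split; [|split; [|split]]]]]].
- move=> i; rewrite /partial_x /=.
  have -> : (fun s => alpha * t + b * (1 + t) * exp (dist2 (upd x i s) z / Ebar)) =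
            (fun s => alpha * t + b * (1 + t) * exp (((s - z i) ^ 2 + Kc x z i) / Ebar)).
    by apply: functional_extensionality => s; rewrite dist2_upd.
  rewrite /Dw (dist2_K x z i); exact: D1.
- move=> i j; rewrite /partial_x /Dw /=.
  case: (eqVneq i j) => [<-|Hij].
    have -> : (fun s => b * (1 + t) * exp (dist2 (upd x i s) z / Ebar) * (2 * (upd x i s i - z i) / Ebar)) =
              (fun s => b * (1 + t) * exp (((s - z i) ^ 2 + Kc x z i) / Ebar) * (2 * (s - z i) / Ebar)).
      by apply: functional_extensionality => s; rewrite dist2_upd upd_at.
    rewrite /D2w eqxx (dist2_K x z i); exact: D3.
  have -> : (fun s => b * (1 + t) * exp (dist2 (upd x j s) z / Ebar) * (2 * (upd x j s i - z i) / Ebar)) =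
            (fun s => b * (1 + t) * exp (((s - z j) ^ 2 + Kc x z j) / Ebar) * (2 * (x i - z i) / Ebar)).
    by apply: functional_extensionality => s; rewrite dist2_upd upd_ne.
  rewrite /D2w (negbTE Hij) Rplus_0_r (dist2_K x z j); exact: D2.
- rewrite /partial_t /wt /=; exact: D4.
- exact: (@cont_plus _ _ _ _ _ H1 (@cont_mult _ _ _ _ _ H2 Hphi)).
- move=> i; exact: (@cont_mult _ _ _ _ _ H3 (H4 i)).
- move=> i j; rewrite /D2w; case: (i == j).
    exact: (@cont_plus _ _ _ _ _ (@cont_mult _ _ _ _ _ (@cont_mult _ _ _ _ _ H3 (H4 j)) (H4 i))
              (@cont_mult _ _ (fun _ _ => 2 / Ebar) _ _ H3 (cont_const _ _ _))).
  exact: (@cont_plus _ _ _ _ _ (@cont_mult _ _ _ _ _ (@cont_mult _ _ _ _ _ H3 (H4 j)) (H4 i))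
              (cont_const _ _ _)).
- exact: (@cont_plus _ _ _ _ _ (cont_const alpha _ _) (@cont_mult _ (fun _ _ => b) _ _ _ (cont_const _ _ _) Hphi)).
- rewrite /= /Dw /D2w /wt.
  set P := exp (dist2 x z / Ebar).
  set c := b * (1 + t) * P.
  set Zw := Z (alpha * t + c).
  have P0 : 0 < P by apply: exp_pos.
  have c0 : 0 < c by rewrite /c; have := Ht; move=> [Ht1 Ht2]; apply: Rmult_lt_0_compat => //; nra.
  have Hclaim : exists (e : vec n) lam th, vnorm e = 1 /\
     (fun i => c * (2 * (x i - z i) / Ebar)) = vscale th e /\
     (fun i j => c * (2 * (x j - z j) / Ebar) * (2 * (x i - z i) / Ebar) +
        (if i == j then c * (2 / Ebar) else 0) +
        Zw * (c * (2 * (x i - z i) / Ebar)) * (c * (2 * (x j - z j) / Ebar))) = mscale (2 * c / Ebar) (Xl lam e).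
    have r0 : 0 <= dist2 x z by apply: rsum_nonneg => i; apply: pow2_ge_0.
    case: (Rle_lt_or_eq_dec _ _ r0) => [rpos|rz].
      pose nr := sqrt (dist2 x z).
      have nr0 : 0 < nr by apply: sqrt_lt_R0.
      have Hnr : nr * nr = dist2 x z by apply: sqrt_sqrt.
      exists (fun i => (x i - z i) / nr), (2 / Ebar * (1 + Zw * c) * (nr * nr)), (c * 2 * nr / Ebar).
      split; [|split].
      + rewrite /vnorm (@rsum_ext _ _ (fun i => / (nr * nr) * (x i - z i) ^ 2)).
          by rewrite rsum_scal -/(dist2 x z) -Hnr Rinv_l ?sqrt_1 //; nra.
        move=> i; field; lra.
      + apply: functional_extensionality => i; rewrite /vscale; field; lra.
      + apply: functional_extensionality => i; apply: functional_extensionality => j.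
        rewrite /mscale /Xl /madd /Defs.mscale /outer /idm.
        case: (i == j); field; lra.
    pose i0 := Ordinal Hn.
    have Hy0 : forall i, x i - z i = 0.
      move=> i; have : (x i - z i) ^ 2 <= dist2 x z.
        by apply: (@rsum_le_term _ (fun j => (x j - z j) ^ 2)) => j; apply: pow2_ge_0.
      rewrite -rz => Hle; have := pow2_ge_0 (x i - z i); nra.
    exists (fun i => if i == i0 then 1 else 0), 0, 0.
    split; [exact: vnorm_e0|split].
    + apply: functional_extensionality => i; rewrite /vscale Hy0; case: (i == i0); field; lra.
    + apply: functional_extensionality => i; apply: functional_extensionality => j.
      rewrite /Xl /madd /Defs.mscale /outer /idm !Hy0.
      case: (i == j); case: (i == i0); case: (j == i0); field; lra.
  have [e [lam [th [He [Hv HX]]]]] := Hclaim.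
  rewrite Hv HX.
  rewrite (proj1 HB th e _ (sym_mscale _ (sym_Xl lam e))).
  have k0 : 0 < 2 * c / Ebar by apply: Rdiv_lt_0_compat; lra.
  rewrite (proj2 HB _ e _ (sym_Xl lam e) k0).
  have Hk := @key_bound n Hn H Lsup Hcont HC lam e He.
  have Hchi := chi_le t Ht.
  have H5 : 2 * c / Ebar * H e (Xl lam e) <= 2 * c / Ebar * M.
    by apply: Rmult_le_compat_l; lra.
  have H6 : 2 * c / Ebar * M = b * P * ((1 + t) / (1 + T)).
    rewrite /c /Ebar; field; lra.
  have H7 : (1 + t) / (1 + T) <= 1.
    have := Ht => -[Ht1 Ht2].
    apply: (Rmult_le_reg_r (1 + T)); first lra.
    rewrite /Rdiv Rmult_assoc Rinv_l; lra.
  have H8 : b * P * ((1 + t) / (1 + T)) <= b * P.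
    have bP : 0 < b * P by apply: Rmult_lt_0_compat.
    nra.
  lra.
Qed.
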